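(* Let $n\ge 6$ and let $e$ be any hyperedge of the Turán hypergraph $T(n,3,2)$. Then $\mathcal{E_S}(T(n,3,2))>\mathcal{E_S}(T(n,3,2)-e)$.
   Context: For a hypergraph $\mathcal{H}$ and distinct vertices $i,j$, the co-degree $c_{ij}$ is the number of hyperedges containing both $i$ and $j$. The Seidel matrix $\mathcal{S}(\mathcal{H})$ has zero diagonal and $(i,j)$-entry $1-2c_{ij}$ for $i\neq j$; the Seidel energy $\mathcal{E_S}(\mathcal{H})$ is the sum of the absolute values of its eigenvalues. The Turán hypergraph $T(n,3,2)$ has $n$ vertices partitioned into two parts $V_1,V_2$ whose sizes differ by at most $1$, and its hyperedges are all $3$-element vertex subsets meeting both $V_1$ and $V_2$ (i.e. it is the complete $3$-uniform bipartite hypergraph with parts of sizes $\lceil n/2\rceil,\lfloor n/2\rfloor$). For a hyperedge $e$, $\mathcal{H}-e$ denotes the hypergraph with the same vertex set and hyperedge set $E(\mathcal{H})\setminus\{e\}$. *)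

(* Defs.v *)
From mathcomp Require Import all_boot all_order all_algebra all_field.
Set Implicit Arguments. Unset Strict Implicit. Unset Printing Implicit Defensive.
Import Order.TTheory GRing.Theory Num.Theory.
Local Open Scope ring_scope.

Definition hypergraph (n : nat) := {set {set 'I_n}}.

Definition codegree n (H : hypergraph n) (i j : 'I_n) : nat :=
  #|[set e in H | (i \in e) && (j \in e)]|.

Definition seidel_matrix n (H : hypergraph n) : 'M[algC]_n :=
  \matrix_(i, j) (if i == j then 0 else 1 - 2 * (codegree H i j)%:R).

Definition mx_spectrum n (A : 'M[algC]_n) : seq algC :=
  sval (closed_field_poly_normal (char_poly A)).

Definition seidel_energy n (H : hypergraph n) : algC :=
  \sum_(z <- mx_spectrum (seidel_matrix H)) `|z|.

Definition turan_part1 n : {set 'I_n} := [set i : 'I_n | i < uphalf n]%N.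
Definition turan_part2 n : {set 'I_n} := ~: turan_part1 n.

Definition turan_3_2 n : hypergraph n :=
  [set e : {set 'I_n} | [&& #|e| == 3%N,
                            e :&: turan_part1 n != set0 &
                            e :&: turan_part2 n != set0]].

(* Main.v *)
Require Import Defs.
From mathcomp Require Import all_boot all_order all_algebra all_field.
From mathcomp Require Import ring zify.
Import Order.TTheory GRing.Theory Num.Theory.
Set Implicit Arguments. Unset Strict Implicit. Unset Printing Implicit Defensive.

Section Comb.
Variable n : nat.
Local Notation TT := (turan_3_2 n).
Local Notation V1 := (turan_part1 n).
Local Notation V2 := (turan_part2 n).

Lemma inV2 k : (k \in V2) = (k \notin V1).
Proof. by rewrite /turan_part2 inE. Qed.

Lemma meets3 (i j k : 'I_n) (V : {set 'I_n}) :
  ([set i; j; k] :&: V != set0) = [|| i \in V, j \in V | k \in V].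
Proof.
apply/set0Pn/idP => [[x /setIP[Hx Vx]]|H].
  by move: Hx; rewrite !inE -orbA => /or3P[]/eqP Ex; rewrite -Ex Vx ?orbT.
case/or3P: H => H; [exists i|exists j|exists k]; by rewrite !inE ?eqxx ?orbT H.
Qed.

Lemma card3 (i j k : 'I_n) : i != j -> k != i -> k != j -> #|[set i; j; k]| = 3.
Proof.
move=> ij ki kj; rewrite cardsU cards2 ij cards1.
have -> : [set i; j] :&: [set k] = set0.
  apply/setP => x; rewrite !inE; apply/negP => /andP[/orP[]/eqP-> /eqP E].
    by rewrite E eqxx in ki.
  by rewrite E eqxx in kj.
by rewrite cards0.
Qed.

Definition Kset (i j : 'I_n) := [set k | (k \notin [set i; j]) && ([set i; j; k] \in TT)].

Lemma codegT i j : i != j -> codegree TT i j = #|Kset i j|.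
Proof.
move=> ij; rewrite /codegree.
have -> : [set f in TT | (i \in f) && (j \in f)] = [set [set i; j; k] | k in Kset i j].
  apply/setP => f; rewrite inE; apply/andP/imsetP => [[fT /andP[fi fj]]|[k kK ->]].
    have := fT; rewrite inE => /andP[/eqP c3 _].
    have ji : j \in f :\ i by rewrite !inE eq_sym ij.
    have c1 : #|f :\ i :\ j| == 1%N.
      by move: c3; rewrite (cardsD1 i) fi (cardsD1 j (f :\ i)) ji => /eqP; rewrite eqSS eqSS.
    case/cards1P: c1 => k gk.
    have kg : k \in f :\ i :\ j by rewrite gk set11.
    move: (kg); rewrite !inE => /andP[kj /andP[ki kf]].
    have fE : f = [set i; j; k].
      apply/setP => x; rewrite !inE; apply/idP/idP => [xf|].
        case: (eqVneq x i) => [//|xi]; case: (eqVneq x j) => [//|xj] /=.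
        have : x \in f :\ i :\ j by rewrite !inE xi xj.
        by rewrite gk inE.
      by rewrite -orbA => /or3P[]/eqP->.
    by exists k => //; rewrite inE -fE fT andbT !inE negb_or ki kj.
  move: kK; rewrite inE => /andP[_ kT]; split => //.
  by rewrite !inE !eqxx orbT.
rewrite card_in_imset // => k1 k2; rewrite !inE => /andP[k1n _] /andP[k2n _] E.
have : k1 \in [set i; j; k2] by rewrite -E !inE eqxx orbT.
rewrite !inE -orbA => /or3P[]/eqP //.
  by move=> E1; rewrite E1 eqxx in k1n.
by move=> E1; rewrite E1 eqxx orbT in k1n.
Qed.

Lemma inK i j k : i != j ->
  (k \in Kset i j) = (k \notin [set i; j]) &&
     ([|| i \in V1, j \in V1 | k \in V1] && [|| i \in V2, j \in V2 | k \in V2]).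
Proof.
move=> ij; rewrite inE; case: (boolP (k \in [set i; j])) => //= kij.
move: kij; rewrite !inE negb_or => /andP[ki kj].
by rewrite card3 // !meets3 eqxx /= !inE.
Qed.


Lemma codeg_sym (H : hypergraph n) i j : codegree H i j = codegree H j i.
Proof. by rewrite /codegree; apply: eq_card => f; rewrite !inE (andbC (i \in f)). Qed.

Lemma codeg_11 i j : i != j -> i \in V1 -> j \in V1 -> codegree TT i j = #|V2|.
Proof.
move=> ij iV jV; rewrite codegT //; apply: eq_card => k.
rewrite inK // !inV2 iV jV /=.
case: (boolP (k \in V1)) => kV; rewrite ?andbF // andbT.
apply/negP; rewrite !inE => /orP[]/eqP E; by rewrite E ?iV ?jV in kV.
Qed.

Lemma codeg_22 i j : i != j -> i \notin V1 -> j \notin V1 -> codegree TT i j = #|V1|.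
Proof.
move=> ij iV jV; rewrite codegT //; apply: eq_card => k.
rewrite inK // !inV2 (negbTE iV) (negbTE jV) /=.
case: (boolP (k \in V1)) => kV; rewrite ?andbF ?andbT //=.
apply/negP; rewrite !inE => /orP[]/eqP E; by rewrite E ?(negbTE iV) ?(negbTE jV) in kV.
Qed.

Lemma codeg_12 i j : i \in V1 -> j \notin V1 -> codegree TT i j = (n - 2)%N.
Proof.
move=> iV jV.
have ij : i != j by apply: contraNneq jV => <-.
rewrite codegT //.
have -> : #|Kset i j| = #|~: [set i; j]|.
  by apply: eq_card => k; rewrite inK // !inV2 iV (negbTE jV) /= andbT !inE.
have := cardsC [set i; j]; rewrite card_ord cards2 ij; lia.
Qed.

Lemma cardV12 : (#|V1| + #|V2|)%N = n.
Proof. by rewrite cardsC card_ord. Qed.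

Hypothesis hn : (6 <= n)%N.

Lemma cardV1 : (3 <= #|V1|)%N.
Proof.
have u3 : (3 <= uphalf n)%N.
  rewrite uphalf_half; have := odd_double_half n; rewrite -!muln2; lia.
have h0 : (0 < n)%N by lia.
have h1 : (1 < n)%N by lia.
have h2 : (2 < n)%N by lia.
pose o0 := Ordinal h0; pose o1 := Ordinal h1; pose o2 := Ordinal h2.
rewrite -(@card3 o0 o1 o2) //; apply: subset_leq_card; apply/subsetP => x.
by rewrite !inE -orbA => /or3P[]/eqP->; rewrite /=; lia.
Qed.

Lemma cardV2 : (3 <= #|V2|)%N.
Proof.
have u3 : (uphalf n <= n - 3)%N.
  rewrite uphalf_half; have := odd_double_half n; rewrite -!muln2; lia.
have h0 : (n - 1 < n)%N by lia.
have h1 : (n - 2 < n)%N by lia.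
have h2 : (n - 3 < n)%N by lia.
pose o0 := Ordinal h0; pose o1 := Ordinal h1; pose o2 := Ordinal h2.
rewrite -(@card3 o0 o1 o2); first last.
- by rewrite -val_eqE /=; lia.
- by rewrite -val_eqE /=; lia.
- by rewrite -val_eqE /=; lia.
apply: subset_leq_card; apply/subsetP => x.
by rewrite !inE -orbA => /or3P[]/eqP->; rewrite /=; lia.
Qed.

End Comb.

Lemma codeg_rem n (H : hypergraph n) e i j : e \in H ->
  codegree (H :\ e) i j = (codegree H i j - ((i \in e) && (j \in e)))%N.
Proof.
move=> eH; rewrite /codegree.
have -> : [set f in H :\ e | (i \in f) && (j \in f)] =
          [set f in H | (i \in f) && (j \in f)] :\ e.
  by apply/setP => f; rewrite !inE -!andbA.
have := cardsD1 e [set f in H | (i \in f) && (j \in f)]; rewrite inE eH /=; lia.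
Qed.

Local Open Scope ring_scope.

Lemma char_poly_conj n (Q D R : 'M[algC]_n) : R *m Q = 1%:M ->
  char_poly (Q *m D *m R) = char_poly D.
Proof.
move=> RQ; have QR := mulmx1C RQ.
have E : char_poly_mx (Q *m D *m R) =
   map_mx polyC Q *m char_poly_mx D *m map_mx polyC R.
  rewrite /char_poly_mx mulmxBr mulmxBl !map_mxM; congr (_ - _).
  by rewrite scalar_mxC -mulmxA -map_mxM QR map_mx1 mulmx1.
rewrite /char_poly E !det_mulmx !det_map_mx mulrC mulrA -rmorphM.
by rewrite -det_mulmx RQ det1 rmorph1 mul1r.
Qed.

Lemma spectrum_diag n (A : 'M[algC]_n) (Q R : 'M[algC]_n) (d : 'rV[algC]_n) :
  R *m Q = 1%:M -> A = Q *m diag_mx d *m R ->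
  perm_eq (mx_spectrum A) [seq d 0 i | i <- enum 'I_n].
Proof.
move=> RQ ->; apply: prod_XsubC_eq; rewrite /mx_spectrum.
case: closed_field_poly_normal => r /= Er.
rewrite (monicP (char_poly_monic _)) scale1r in Er.
rewrite -Er char_poly_conj // char_poly_trig ?diag_mx_is_trig //.
rewrite big_map big_enum /=; apply: eq_bigr => i _; by rewrite mxE eqxx mulr1n.
Qed.
Section Gen.
Variable n : nat.
Implicit Types (A : 'M[algC]_n) (x : 'rV[algC]_n).

Definition qf A x := \sum_i \sum_j x 0 i * A i j * (x 0 j)^*.
Definition nrm x := \sum_i `|x 0 i| ^+ 2.

Local Open Scope sesquilinear_scope.

Lemma qfE A x : (x *m A *m x ^t*) 0 0 = qf A x.
Proof.
rewrite /qf !mxE; under eq_bigr do rewrite !mxE big_distrl /=.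
rewrite exchange_big /=; apply: eq_bigr => i _; apply: eq_bigr => j _.
by [].
Qed.

Lemma trmxC_mul m p (B : 'M[algC]_(m, n)) (D : 'M[algC]_(n, p)) :
  (B *m D) ^t* = D ^t* *m B ^t*.
Proof. by rewrite trmx_mul map_mxM. Qed.

Lemma qf_diag (d : 'rV[algC]_n) x : qf (diag_mx d) x = \sum_k d 0 k * `|x 0 k| ^+ 2.
Proof.
rewrite /qf; apply: eq_bigr => i _; rewrite (bigD1 i) //= big1 => [|j ji].
  by rewrite !mxE eqxx mulr1n addr0 normCK mulrAC mulrC.
by rewrite !mxE eq_sym (negbTE ji) mulr0n mulr0 mul0r.
Qed.

Lemma nrm_qf x : nrm x = qf 1%:M x.
Proof.
rewrite /nrm -[1%:M]diag_const_mx qf_diag; apply: eq_bigr => i _.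
by rewrite mxE mul1r.
Qed.

Variable A : 'M[algC]_n.
Hypothesis Ah : A \is hermsymmx.
Let P := spectralmx A.
Let d := spectral_diag A.

Lemma specA : A = P ^t* *m diag_mx d *m P.
Proof.
have := hermitian_normalmx Ah => /orthomx_spectralP.
by rewrite invmx_unitary // spectral_unitarymx.
Qed.

Lemma PPt : P *m P ^t* = 1%:M.
Proof. by apply/unitarymxP; exact: spectral_unitarymx. Qed.

Lemma PtP : P ^t* *m P = 1%:M.
Proof. exact: mulmx1C PPt. Qed.

Lemma qf_spec x : qf A x = \sum_k d 0 k * `|(x *m P ^t*) 0 k| ^+ 2.
Proof.
rewrite -qfE {1}specA -qf_diag -qfE; congr (_ 0 0).
by rewrite trmxC_mul trmxCK !mulmxA.
Qed.

Lemma nrm_spec x : nrm (x *m P ^t*) = nrm x.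
Proof.
rewrite !nrm_qf -!qfE trmxC_mul trmxCK; congr (_ 0 0).
by rewrite !mulmx1 mulmxA -(mulmxA x) PtP mulmx1.
Qed.

Lemma rowP_spec k : row k P *m P ^t* = delta_mx 0 k.
Proof. by rewrite -row_mul PPt row1. Qed.

Lemma d_real k : d 0 k \is Num.real.
Proof. by have /mxOverP := hermitian_spectral_diag_real Ah; apply. Qed.

Lemma sum_d : \sum_k d 0 k = \tr A.
Proof.
rewrite [in RHS]specA mxtrace_mulC mulmxA PPt mul1mx /mxtrace.
by apply: eq_bigr => i _; rewrite mxE eqxx mulr1n.
Qed.

End Gen.

Lemma real_argmin n (f : 'I_n -> algC) (i0 : 'I_n) :
  (forall i, f i \is Num.real) -> exists k, forall i, f k <= f i.
Proof.
move=> fr.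
suff [k Hk] : exists k, forall i, i \in enum 'I_n -> f k <= f i.
  by exists k => i; apply: Hk; rewrite mem_enum.
elim: (enum 'I_n) => [|a s [k Hk]]; first by exists i0.
have /orP[le|le] := real_leVge (fr a) (fr k).
  exists a => i; rewrite inE => /orP[/eqP->//|/Hk]; exact: le_trans.
by exists k => i; rewrite inE => /orP[/eqP->//|/Hk].
Qed.

Section Gen2.
Variable n : nat.
Local Open Scope sesquilinear_scope.
Variable A : 'M[algC]_n.
Hypothesis Ah : A \is hermsymmx.
Let P := spectralmx A.
Let d := spectral_diag A.

Lemma qf_ge_min k : (forall i, d 0 k <= d 0 i) ->
  forall x, d 0 k * nrm x <= qf A x.
Proof.
move=> Hk x; rewrite qf_spec // -(@nrm_spec _ A) /nrm mulr_sumr.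
apply: ler_sum => i _; apply: ler_wpM2r; first by rewrite exprn_ge0.
exact: Hk.
Qed.

Lemma qf_row k : qf A (row k P) = d 0 k.
Proof.
rewrite qf_spec // rowP_spec // (bigD1 k) //= big1 => [|j jk].
  by rewrite !mxE !eqxx /= normr1 expr1n mulr1 addr0.
by rewrite !mxE (negbTE jk) andbF normr0 expr0n mulr0.
Qed.

Lemma nrm_row k : nrm (row k P) = 1.
Proof.
rewrite -(@nrm_spec _ A) rowP_spec // /nrm (bigD1 k) //= big1 => [|j jk].
  by rewrite !mxE !eqxx /= normr1 expr1n addr0.
by rewrite !mxE (negbTE jk) andbF normr0 expr0n.
Qed.

Lemma energyE : \sum_(z <- mx_spectrum A) `|z| = \sum_i `|d 0 i|.
Proof.
rewrite (perm_big _ (spectrum_diag (@PPt _ A) (@specA _ _ Ah))) big_map big_enum.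
by [].
Qed.

End Gen2.

Lemma sum_le_term (I : finType) (F : I -> algC) i0 :
  (forall i, F i <= 0) -> \sum_i F i <= F i0.
Proof.
move=> H; rewrite (bigD1 i0) //= -[leRHS]addr0 lerD2l.
by apply: sumr_le0 => i _; exact: H.
Qed.

Lemma sum_ge_term (I : finType) (F : I -> algC) i0 :
  (forall i, 0 <= F i) -> F i0 <= \sum_i F i.
Proof.
move=> H; rewrite (bigD1 i0) //= -[leLHS]addr0 lerD2l.
by apply: sumr_ge0 => i _; exact: H.
Qed.

Section BF.
Variable n : nat.
Implicit Types (A : 'M[algC]_n) (x y z : 'rV[algC]_n).

Definition bf A x y := \sum_i \sum_j x 0 i * A i j * (y 0 j)^*.

Lemma qf_bf A x : qf A x = bf A x x.
Proof. by []. Qed.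

Lemma bfDl A x y z : bf A (x + y) z = bf A x z + bf A y z.
Proof.
rewrite /bf -big_split; apply: eq_bigr => i _; rewrite -big_split.
by apply: eq_bigr => j _; rewrite mxE !mulrDl.
Qed.

Lemma bfDr A x y z : bf A x (y + z) = bf A x y + bf A x z.
Proof.
rewrite /bf -big_split; apply: eq_bigr => i _; rewrite -big_split.
by apply: eq_bigr => j _; rewrite mxE rmorphD /= !mulrDr.
Qed.

Lemma bfZl A t x y : bf A (t *: x) y = t * bf A x y.
Proof.
rewrite /bf mulr_sumr; apply: eq_bigr => i _; rewrite mulr_sumr.
by apply: eq_bigr => j _; rewrite mxE !mulrA.
Qed.

Lemma bfZr A t x y : bf A x (t *: y) = t^* * bf A x y.
Proof.
rewrite /bf mulr_sumr; apply: eq_bigr => i _; rewrite mulr_sumr.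
by apply: eq_bigr => j _; rewrite mxE rmorphM /= mulrCA mulrA.
Qed.

Lemma sum_delta (F : 'I_n -> algC) i :
  \sum_j F j * ((j == i)%:R) = F i.
Proof.
rewrite (bigD1 i) //= big1 => [|j ji]; first by rewrite eqxx mulr1 addr0.
by rewrite (negbTE ji) mulr0.
Qed.
End BF.

Section Aux.
Variable n : nat.
Implicit Types (M : 'M[algC]_n) (x : 'rV[algC]_n).

Lemma qfB M1 M2 x : qf (M1 - M2) x = qf M1 x - qf M2 x.
Proof.
rewrite /qf -sumrB; apply: eq_bigr => i _; rewrite -sumrB.
by apply: eq_bigr => j _; rewrite !mxE mulrBr mulrBl.
Qed.

Lemma nrm_ge0 x : 0 <= nrm x.
Proof. by apply: sumr_ge0 => i _; rewrite exprn_ge0. Qed.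

Lemma delta_entry (i m : 'I_n) : (delta_mx 0 i : 'rV[algC]_n) 0 m = (m == i)%:R.
Proof. by rewrite mxE eqxx. Qed.

Lemma qf_add_delta M x i t : t \is Num.real ->
  qf M (x + t *: delta_mx 0 i) = qf M x + t * (\sum_m x 0 m * M m i)
     + t * (\sum_j M i j * (x 0 j)^*) + t ^+ 2 * M i i.
Proof.
move=> tr; rewrite !qf_bf bfDl !bfDr !bfZl !bfZr conj_Creal //.
have E1 : bf M x (delta_mx 0 i) = \sum_m x 0 m * M m i.
  apply: eq_bigr => m _; rewrite -(sum_delta (fun j => x 0 m * M m j)).
  by apply: eq_bigr => j _; rewrite delta_entry conjC_nat.
have E2 y : bf M (delta_mx 0 i) y = \sum_j M i j * (y 0 j)^*.
  rewrite /bf -(sum_delta (fun m => \sum_j M m j * (y 0 j)^*)).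
  apply: eq_bigr => m _; rewrite mulr_suml; apply: eq_bigr => j _.
  by rewrite delta_entry -mulrA mulrC.
have E3 : bf M (delta_mx 0 i) (delta_mx 0 i) = M i i.
  by rewrite E2 -(sum_delta (M i)); apply: eq_bigr => j _; rewrite delta_entry conjC_nat.
by rewrite E1 E2 E3 expr2 !mulrA (mulrC _ t) addrA.
Qed.

End Aux.

Lemma herm_of n (M : 'M[algC]_n) : (forall i j, M i j = M j i) ->
  (forall i j, M i j \is Num.real) -> M \is hermsymmx.
Proof.
move=> Ms Mr; apply/is_hermitianmxP; rewrite expr0 scale1r.
by apply/matrixP => i j; rewrite !mxE Ms conj_Creal.
Qed.

Section Main.
Variable n : nat.
Local Open Scope sesquilinear_scope.
Variables A B : 'M[algC]_n.
Hypothesis Asym : forall i j, A i j = A j i.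
Hypothesis Areal : forall i j, A i j \is Num.real.
Hypothesis Bsym : forall i j, B i j = B j i.
Hypothesis Breal : forall i j, B i j \is Num.real.
Hypothesis trA : \tr A = 0.
Hypothesis trB : \tr B = 0.
Hypothesis Bnp : forall i j, B i j <= 0.
Hypothesis Bdiag : forall i, B i i = 0.
Hypothesis Boff : forall i j, i != j -> B i j < 0.
Hypothesis Pnn : forall i j, 0 <= B i j - A i j.
Variables i0 j0 : 'I_n.
Hypothesis ij0 : i0 != j0.
Hypothesis Ppos : 0 < B i0 j0 - A i0 j0.
Hypothesis H4 : forall x : 'rV[algC]_n, \sum_i x 0 i = 0 -> 0 <= qf B x.

Let Ah := herm_of Asym Areal.
Let Bh := herm_of Bsym Breal.
Let dA := spectral_diag A.
Let dB := spectral_diag B.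
Let PB := spectralmx B.

Lemma lmin_ex : exists k, forall i, dB 0 k <= dB 0 i.
Proof. exact: real_argmin i0 (d_real Bh). Qed.

Lemma lneg k : (forall i, dB 0 k <= dB 0 i) -> dB 0 k < 0.
Proof.
move=> Hk; pose one := const_mx 1 : 'rV[algC]_n.
have q1 : qf B one < 0.
  apply: (le_lt_trans _ (Boff ij0)); rewrite /qf.
  apply: (le_trans (sum_le_term i0 _)) => [i|].
    by apply: sumr_le0 => j _; rewrite !mxE conjC1 mulr1 mul1r.
  apply: (le_trans (sum_le_term j0 _)) => [j|].
    by rewrite !mxE conjC1 mulr1 mul1r.
  by rewrite !mxE conjC1 mulr1 mul1r.
have lt := le_lt_trans (qf_ge_min Bh Hk one) q1.
rewrite real_ltNge ?(d_real Bh) ?real0 //; apply/negP => l0.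
by move: lt; rewrite le_gtF // mulr_ge0 // nrm_ge0.
Qed.


Section K.
Variable k : 'I_n.
Hypothesis Hk : forall i, dB 0 k <= dB 0 i.
Let l := dB 0 k.
Let v := row k PB.
Let w : 'rV[algC]_n := \row_i `|v 0 i|.

Lemma lreal : l \is Num.real.
Proof. exact: (d_real Bh k). Qed.

Lemma nrm_w : nrm w = 1.
Proof.
rewrite -(nrm_row B k) /nrm; apply: eq_bigr => i _.
by rewrite mxE normr_id.
Qed.

Lemma qf_w : qf B w <= l.
Proof.
have e1 : - qf B w = \sum_i \sum_j `|v 0 i * B i j * (v 0 j)^*|.
  rewrite /qf -sumrN; apply: eq_bigr => i _; rewrite -sumrN.
  apply: eq_bigr => j _; rewrite !mxE conj_normC !normrM norm_conjC.
  by rewrite (ler0_norm (Bnp i j)) mulrN mulNr.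
have e2 : `|qf B v| <= - qf B w.
  rewrite e1 /qf; apply: le_trans (ler_norm_sum _ _ _) _.
  by apply: ler_sum => i _; apply: ler_norm_sum.
rewrite (qf_row Bh k) -/l in e2.
rewrite -lerN2; apply: le_trans e2.
by rewrite -normrN real_ler_norm // realN lreal.
Qed.

Lemma w_pos i : 0 < w 0 i.
Proof.
rewrite mxE lt_def normr_ge0 andbT normr_eq0; apply/negP => /eqP vi0.
have wi0 : w 0 i = 0 by rewrite mxE vi0 normr0.
have [j vj] : exists j, v 0 j != 0.
  case: (pickP (fun j => v 0 j != 0)) => [j vj|all0]; first by exists j.
  have := nrm_row B k; rewrite /nrm big1 => [/eqP|j _].
    by rewrite eq_sym oner_eq0.
  by have := all0 j => /= /negbFE/eqP ->; rewrite normr0 expr0n.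
have ji : j != i by apply: contraNneq vj => ->; rewrite vi0.
pose s := \sum_m B i m * w 0 m.
have sneg : s < 0.
  apply: (le_lt_trans (sum_le_term j _)) => [m|].
    by apply: mulr_le0_ge0; rewrite ?Bnp // mxE normr_ge0.
  rewrite pmulr_llt0; first by rewrite Boff // eq_sym.
  by rewrite mxE lt_def normr_ge0 andbT normr_eq0.
have ln := lneg Hk.
pose t := s / l.
have tpos : 0 < t by rewrite /t -mulrNN -invrN divr_gt0 // oppr_gt0.
have tr : t \is Num.real by apply: gtr0_real.
have lt : l * t = s by rewrite /t mulrCA divff ?mulr1 // lt_eqF.
have E1 : \sum_m w 0 m * B m i = s.
  by apply: eq_bigr => m _; rewrite mulrC Bsym.
have E2 : \sum_j B i j * (w 0 j)^* = s.
  by apply: eq_bigr => m _; rewrite mxE conj_normC.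
have N1 : \sum_m w 0 m * (1%:M : 'M[algC]_n) m i = 0.
  rewrite (bigD1 i) //= big1 ?wi0 ?mul0r ?addr0 // => m mi.
  by rewrite [1%:M _ _]mxE (negbTE mi) mulr0n mulr0.
have N2 : \sum_j (1%:M : 'M[algC]_n) i j * (w 0 j)^* = 0.
  rewrite (bigD1 i) //= big1 ?wi0 ?conjC0 ?mulr0 ?addr0 // => m mi.
  by rewrite [1%:M _ _]mxE eq_sym (negbTE mi) mulr0n mul0r.
pose z := w + t *: delta_mx 0 i.
have qz : qf B z = qf B w + t * s + t * s.
  by rewrite /z qf_add_delta // E1 E2 Bdiag mulr0 addr0.
have nz : nrm z = 1 + t ^+ 2.
  by rewrite /z !nrm_qf qf_add_delta // N1 N2 -nrm_qf nrm_w !mulr0 !addr0 mxE eqxx mulr1.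
have := qf_ge_min Bh Hk z; rewrite -/l qz nz mulrDr mulr1.
have -> : l * t ^+ 2 = t * s by rewrite expr2 mulrA lt mulrC.
move=> H; have H' : l + t * s <= l + t * s + t * s.
  apply: le_trans H _; rewrite -!addrA lerD2r; exact: qf_w.
have : 0 <= t * s by rewrite -(lerD2l (l + t * s)) addr0.
by move=> /le_gtF; rewrite pmulr_rlt0 // sneg.
Qed.


Lemma one_neg j : j != k -> 0 <= dB 0 j.
Proof.
move=> jk; rewrite real_leNgt ?real0 ?(d_real Bh j) //; apply/negP => dj.
pose u := row j PB; pose uk := row k PB.
pose a := \sum_m uk 0 m; pose b := - \sum_m u 0 m.
pose ab := if (a == 0) && (b == 0) then (1, 0) else (a, b).
pose x := ab.1 *: u + ab.2 *: uk.
have xs : \sum_m x 0 m = 0.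
  have -> : \sum_m x 0 m = ab.1 * \sum_m u 0 m + ab.2 * \sum_m uk 0 m.
    by rewrite !mulr_sumr -big_split; apply: eq_bigr => m _; rewrite !mxE.
  have Su : \sum_m u 0 m = - b by rewrite /b opprK.
  rewrite Su -/a /ab; case: ifP => [/andP[_ /eqP b0]|_] /=.
    by rewrite b0 oppr0 mulr0 mul0r addr0.
  by rewrite mulrN mulrC addNr.
have y_eq : x *m PB ^t* = ab.1 *: delta_mx 0 j + ab.2 *: delta_mx 0 k.
  by rewrite mulmxDl -!scalemxAl !rowP_spec.
have yE m : (ab.1 *: delta_mx 0 j + ab.2 *: delta_mx 0 k : 'rV[algC]_n) 0 m
    = ab.1 * (m == j)%:R + ab.2 * (m == k)%:R.
  by rewrite !mxE !eqxx.
have kj : (k == j) = false by rewrite eq_sym (negbTE jk).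
have qx : qf B x = dB 0 j * `|ab.1| ^+ 2 + l * `|ab.2| ^+ 2.
  rewrite (qf_spec Bh) y_eq (bigD1 j) //= (bigD1 k) /=; last by rewrite kj.
  rewrite big1 => [|m /andP[mj mk]].
    by rewrite !yE !eqxx (negbTE jk) kj !mulr0 !mulr1 addr0 add0r addr0.
  by rewrite yE (negbTE mj) (negbTE mk) !mulr0 addr0 normr0 expr0n mulr0.
have ln := lneg Hk.
have qneg : qf B x < 0.
  rewrite qx; case: (eqVneq ab.1 0) => [a0|a0].
    have b0 : ab.2 != 0.
      move: a0; rewrite /ab; case: ifP => [_ /eqP|H] /=.
        by rewrite oner_eq0.
      by move=> a0'; move: H; rewrite a0' eqxx /= => ->.
    rewrite a0 normr0 expr0n mulr0 add0r pmulr_llt0 //.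
    by rewrite exprn_gt0 // normr_gt0.
  rewrite -[X in _ < X](addr0 0); apply: ltr_leD.
    by rewrite pmulr_llt0 // exprn_gt0 // normr_gt0.
  by rewrite mulr_le0_ge0 ?exprn_ge0 // ltW.
by move: qneg; rewrite le_gtF // H4.
Qed.

Lemma energyB : \sum_i `|dB 0 i| = - l - l.
Proof.
have S0 := sum_d Bh; rewrite trB (bigD1 k) //= in S0.
rewrite (bigD1 k) //= ltr0_norm ?lneg // -/l.
rewrite (eq_bigr (fun i => dB 0 i)) => [|i ik]; last first.
  by rewrite ger0_norm // one_neg.
by rewrite -(addKr l (\sum_(i < n | i != k) dB 0 i)) -/l S0 addr0.
Qed.

Lemma energyA_lb kA : - dA 0 kA - dA 0 kA <= \sum_i `|dA 0 i|.
Proof.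
have S0 := sum_d Ah; rewrite trA (bigD1 kA) //= in S0.
rewrite (bigD1 kA) //=; apply: lerD.
  by rewrite -normrN real_ler_norm // realN (d_real Ah).
apply: le_trans (ler_norm_sum _ _ _).
rewrite -(addKr (dA 0 kA) (\sum_(i < n | i != kA) dA 0 i)) S0 addr0.
by rewrite real_ler_norm // realN (d_real Ah).
Qed.

Lemma main_K : \sum_(z <- mx_spectrum B) `|z| < \sum_(z <- mx_spectrum A) `|z|.
Proof.
rewrite (energyE Bh) (energyE Ah) -/dA -/dB energyB.
have [kA HkA] := real_argmin i0 (d_real Ah).
apply: (lt_le_trans _ (energyA_lb kA)).
have wc j : (w 0 j)^* = w 0 j by rewrite mxE conj_normC.
have w0 i : 0 <= w 0 i := ltW (w_pos i).
have qP : 0 < qf (B - A) w.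
  rewrite /qf; apply: (lt_le_trans _ (sum_ge_term i0 _)) => [|i]; last first.
    apply: sumr_ge0 => j _; rewrite wc [(B - A) _ _]mxE.
    by rewrite !mulr_ge0 ?w0 // [(- A) _ _]mxE Pnn.
  apply: (lt_le_trans _ (sum_ge_term j0 _)) => [|j]; last first.
    rewrite wc [(B - A) _ _]mxE.
    by rewrite !mulr_ge0 ?w0 // [(- A) _ _]mxE Pnn.
  by rewrite wc [(B - A) _ _]mxE [(- A) _ _]mxE !mulr_gt0 ?w_pos.
have la : dA 0 kA < l.
  have := qf_ge_min Ah HkA w; rewrite nrm_w mulr1 => H.
  apply: (le_lt_trans H).
  have -> : qf A w = qf B w - qf (B - A) w.
    by rewrite qfB opprB addrCA subrr addr0.
  apply: (lt_le_trans _ qf_w).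
  by rewrite -[X in _ < X]subr0 ltrD2l ltrN2.
by apply: ltrD; rewrite ltrN2.
Qed.

End K.

Lemma main_energy : \sum_(z <- mx_spectrum B) `|z| < \sum_(z <- mx_spectrum A) `|z|.
Proof. by have [k Hk] := lmin_ex; exact: (main_K Hk). Qed.

End Main.

Section QF.
Variable n : nat.
Implicit Types (M : 'M[algC]_n) (x : 'rV[algC]_n).

Lemma qfD M1 M2 x : qf (M1 + M2) x = qf M1 x + qf M2 x.
Proof.
rewrite /qf -big_split; apply: eq_bigr => i _; rewrite -big_split.
by apply: eq_bigr => j _; rewrite !mxE mulrDr mulrDl.
Qed.

Lemma qfZ c M x : qf (c *: M) x = c * qf M x.
Proof.
rewrite /qf mulr_sumr; apply: eq_bigr => i _; rewrite mulr_sumr.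
by apply: eq_bigr => j _; rewrite !mxE mulrCA !mulrA.
Qed.

Lemma qf_R (u : 'I_n -> algC) x : (forall i, (u i)^* = u i) ->
  qf (\matrix_(i, j) (u i * u j)) x = `|\sum_i x 0 i * u i| ^+ 2.
Proof.
move=> ur; rewrite normCK rmorph_sum big_distrl /=; apply: eq_bigr => i _.
rewrite big_distrr /=; apply: eq_bigr => j _.
by rewrite !mxE rmorphM /= ur; ring.
Qed.

End QF.

Lemma seidelE n (H : hypergraph n) i j :
  seidel_matrix H i j = if i == j then 0 else 1 - 2 * (codegree H i j)%:R.
Proof. by rewrite mxE. Qed.

Section Final.
Variable n : nat.
Hypothesis hn : (6 <= n)%N.
Variable e : {set 'I_n}.
Hypothesis he : e \in turan_3_2 n.
Local Notation TT := (turan_3_2 n).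
Local Notation V1 := (turan_part1 n).
Local Notation V2 := (turan_part2 n).
Let a := #|V1|.
Let b := #|V2|.
Let A := seidel_matrix TT.
Let B := seidel_matrix (TT :\ e).
Let u1 (i : 'I_n) : algC := (i \in V1)%:R.
Let u2 (i : 'I_n) : algC := (i \notin V1)%:R.
Let ue (i : 'I_n) : algC := (i \in e)%:R.
Let c0 : algC := 5 - 2 * n%:R.
Let al : algC := 2 * (a%:R - 2).
Let be : algC := 2 * (b%:R - 2).

Lemma nE : n%:R = a%:R + b%:R :> algC.
Proof. by rewrite -natrD cardV12. Qed.

Lemma codegT_ge2 i j : i != j -> (2 <= codegree TT i j)%N.
Proof.
move=> ij; case: (boolP (i \in V1)) => iV; case: (boolP (j \in V1)) => jV.
- by rewrite codeg_11 //; have := cardV2 hn; lia.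
- by rewrite codeg_12 //; lia.
- by rewrite codeg_sym codeg_12 //; lia.
- by rewrite codeg_22 //; have := cardV1 hn; lia.
Qed.

Lemma A_off i j : i != j -> A i j = c0 + al * (u1 i * u1 j) + be * (u2 i * u2 j).
Proof.
move=> ij; rewrite /A seidelE (negbTE ij) /c0 /al /be /u1 /u2 nE.
case: (boolP (i \in V1)) => iV; case: (boolP (j \in V1)) => jV /=.
- by rewrite codeg_11 //; ring.
- by rewrite codeg_12 // natrB ?nE; [ring | lia].
- by rewrite codeg_sym codeg_12 // natrB ?nE; [ring | lia].
- by rewrite codeg_22 //; ring.
Qed.

Lemma B_off i j : i != j -> B i j = A i j + 2 * (ue i * ue j).
Proof.
move=> ij; have := codegT_ge2 ij.
rewrite /B /A !seidelE (negbTE ij) codeg_rem // /ue.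
by case: (i \in e); case: (j \in e) => /= c2; rewrite ?subn0 ?natrB; [ring|lia|ring|ring|ring].
Qed.

Lemma A_diag i : A i i = 0.
Proof. by rewrite /A seidelE eqxx. Qed.

Lemma B_diag i : B i i = 0.
Proof. by rewrite /B seidelE eqxx. Qed.


Let Rm (u : 'I_n -> algC) : 'M[algC]_n := \matrix_(i, j) (u i * u j).
Let g (i : 'I_n) : algC :=
  c0 + al * (u1 i * u1 i) + be * (u2 i * u2 i) + 2 * (ue i * ue i).

Lemma B_decomp : B = c0 *: Rm (fun _ => 1) + al *: Rm u1 + be *: Rm u2
                     + 2 *: Rm ue - diag_mx (\row_i g i).
Proof.
apply/matrixP => i j; case: (eqVneq i j) => [<-|ij].
  by rewrite B_diag !mxE eqxx mulr1n /g; ring.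
by rewrite B_off // A_off // !mxE (negbTE ij) mulr0n; ring.
Qed.

Lemma g_le0 i : g i <= 0.
Proof.
have key : g i = (1 + 2 * (i \in e))%:R - (2 * (if i \in V1 then b else a))%:R.
  rewrite /g /c0 /al /be /u1 /u2 /ue nE.
  by case: (i \in V1); case: (i \in e); rewrite /= ?natrD ?natrM; ring.
rewrite key subr_le0 ler_nat.
have := cardV1 hn; have := cardV2 hn; rewrite -/a -/b.
by case: (i \in V1); case: (i \in e) => /=; lia.
Qed.

Lemma H4B (x : 'rV[algC]_n) : \sum_i x 0 i = 0 -> 0 <= qf B x.
Proof.
move=> hx; rewrite B_decomp qfB !qfD !qfZ !qf_R ?qf_diag; first last.
- by move=> i; rewrite conjC1.
- by move=> i; rewrite /u1 conjC_nat.
- by move=> i; rewrite /u2 conjC_nat.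
- by move=> i; rewrite /ue conjC_nat.
have -> : \sum_i x 0 i * 1 = 0 by rewrite -[RHS]hx; apply: eq_bigr => i _; rewrite mulr1.
rewrite normr0 expr0n mulr0 add0r.
have a3 := cardV1 hn; have b3 := cardV2 hn.
have al0 : 0 <= al.
  rewrite /al mulr_ge0 // subr_ge0.
  by have : (2%:R <= a%:R :> algC) by rewrite ler_nat; lia.
have be0 : 0 <= be.
  rewrite /be mulr_ge0 // subr_ge0.
  by have : (2%:R <= b%:R :> algC) by rewrite ler_nat; lia.
apply: addr_ge0.
  by rewrite !addr_ge0 // mulr_ge0 // exprn_ge0.
rewrite oppr_ge0; apply: sumr_le0 => i _.
by rewrite mxE mulr_le0_ge0 ?g_le0 // exprn_ge0.
Qed.


Lemma final_ineq : \sum_(z <- mx_spectrum B) `|z| < \sum_(z <- mx_spectrum A) `|z|.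
Proof.
have : (1 < #|e|)%N by move: he; rewrite inE => /and3P[/eqP-> _ _].
case/card_gt1P => i0 [j0 [i0e j0e ij0]].
have Areal i j : A i j \is Num.real.
  rewrite /A seidelE; case: (i == j); first exact: real0.
  by rewrite rpredB ?rpred1 // rpredM ?realn.
have Breal i j : B i j \is Num.real.
  rewrite /B seidelE; case: (i == j); first exact: real0.
  by rewrite rpredB ?rpred1 // rpredM ?realn.
have Boff i j : i != j -> B i j < 0.
  move=> ij; rewrite /B seidelE (negbTE ij) codeg_rem //.
  have := codegT_ge2 ij; set c := (codegree _ i j - _)%N => c2.
  have c1 : (1 <= c)%N by rewrite /c; case: (_ && _) => /=; lia.
  rewrite subr_lt0 -natrM (ltr_nat _ 1); lia.
apply: (@main_energy n A B _ _ _ _ _ _ _ _ _ _ i0 j0 ij0).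
- by move=> i j; rewrite /A !seidelE eq_sym codeg_sym.
- exact: Areal.
- by move=> i j; rewrite /B !seidelE eq_sym codeg_sym.
- exact: Breal.
- by rewrite /mxtrace big1 // => i _; rewrite A_diag.
- by rewrite /mxtrace big1 // => i _; rewrite B_diag.
- move=> i j; case: (eqVneq i j) => [->|ij]; first by rewrite B_diag.
  by rewrite ltW // Boff.
- exact: B_diag.
- exact: Boff.
- move=> i j; case: (eqVneq i j) => [->|ij]; first by rewrite B_diag A_diag subr0.
  by rewrite B_off // addrC addKr mulr_ge0 // mulr_ge0 // /ue ler0n.
- by rewrite B_off // addrC addKr /ue i0e j0e /= !mulr1 ltr0n.
- exact: H4B.
Qed.

End Final.

Theorem corollary2p14 (n : nat) (hn : (6 <= n)%N) (e : {set 'I_n})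
    (he : e \in turan_3_2 n) :
  seidel_energy (turan_3_2 n :\ e) < seidel_energy (turan_3_2 n).
Proof. exact: final_ineq. Qed.
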